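(* There is an absolute constant $C$ such that for every integer $n\ge 2$ and every $(x_1,\dots,x_n)\in A_n$, $$S_n(x_1,\dots,x_n)\le n^3+Cn^2 .$$
   Context: For an integer $n\ge 2$, $A_n$ is the set of integer vectors $(x_1,\dots,x_n)\in\mathbb{Z}^n$ such that $n\ge x_1\ge x_2\ge\cdots\ge x_n\ge 0$, $\sum_{i=1}^k x_i\le 2n+6k-16$ for every $k\in\{1,\dots,n\}$, and $\sum_{i=1}^n x_i\le 6n-12$. For an integer $m\ge 2$, $S_m:\mathbb{R}^m\to\mathbb{R}$ is defined by $S_m(x_1,\dots,x_m)=\sum_{i=1}^{m-1}\sum_{j=i+1}^{m} x_i x_j^2$. *)

(* Defs.v *)
From mathcomp Require Import all_boot all_order all_algebra.
Set Implicit Arguments. Unset Strict Implicit. Unset Printing Implicit Defensive.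
Import Order.TTheory GRing.Theory Num.Theory.
Local Open Scope ring_scope.

(* Vectors (x_1,...,x_n) are functions x : 'I_n -> int, with x_{i+1} = x i
   (0-based indexing). *)

Definition in_A (n : nat) (x : 'I_n -> int) : Prop :=
  (forall i : 'I_n, x i <= n%:Z) /\
  (forall i j : 'I_n, (i <= j)%N -> x j <= x i) /\
  (forall i : 'I_n, 0 <= x i) /\
  (forall k : nat, (1 <= k <= n)%N ->
     \sum_(i < n | (i < k)%N) x i <= 2 * n%:Z + 6 * k%:Z - 16) /\
  \sum_(i < n) x i <= 6 * n%:Z - 12.

Definition S (R : pzRingType) (m : nat) (x : 'I_m -> R) : R :=
  \sum_(i < m) \sum_(j < m | (i < j)%N) x i * x j ^+ 2.

(* Main.v *)
Require Import Defs.
From mathcomp Require Import all_boot all_order all_algebra.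
From mathcomp Require Import zify ring lra.
Import Order.TTheory GRing.Theory Num.Theory.
Local Open Scope ring_scope.

Lemma cube_step (a x : int) : 0 <= x -> 2*x <= a -> 8 * x^+2 * a <= (a+x)^+3 - a^+3.
Proof. move=> h1 h2.
have h3: 0 <= x*(a*(3*a-5*x)+x^+2).
  apply: mulr_ge0 => //; apply: addr_ge0; last exact: sqr_ge0.
  apply: mulr_ge0; lia.
have e: (a+x)^+3 - a^+3 - 8*x^+2*a = x*(a*(3*a-5*x)+x^+2) by ring.
lia. Qed.

Lemma crossing (a x N k : int) : 0 <= x -> 0 <= a -> a < 2*N -> 2 <= k ->
  k * x <= a -> a + x <= 2*N + 6*k - 10 -> 2 <= N ->
  a^+3 + 8 * x^+2 * a <= 8 * N^+3 + 288 * N^+2.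
Proof.
move=> hx ha haN hk hkx hax hN.
have h2x : 2 * x <= a.
  have : 0 <= (k-2)*x by apply: mulr_ge0; lia.
  lia.
have [hk2|hk3] : k = 2 \/ 3 <= k by lia.
  subst k.
  have := cube_step _ _ hx h2x.
  have hc : (a+x)^+3 <= (2*N+2)^+3.
    by apply: lerXn2r; rewrite ?nnegrE; lia.
  have : 0 <= N^+2 * (N-2) by apply: mulr_ge0; [exact: sqr_ge0| lia].
  have : 0 <= N * (N-2) by apply: mulr_ge0; lia.
  lia.
set d := 2*N - a.
have F1 : 0 <= d * ((2*N-a)*(2*N+a)) by apply: mulr_ge0; [lia|apply: mulr_ge0; lia].
have F2 : 0 <= d * a * (2*N-a) by apply: mulr_ge0; [apply: mulr_ge0|]; lia.
have F3x : 3 * x <= a.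
  have : 0 <= (k-3)*x by apply: mulr_ge0; lia.
  lia.
have F3 : 0 <= a * d * (a - 3*x) by apply: mulr_ge0; [apply: mulr_ge0|]; lia.
have F4 : 0 <= a * x * (d - x + 6*k + 6) by apply: mulr_ge0; [apply: mulr_ge0|]; lia.
have F5 : 0 <= a * (4*a - 3*(k+1)*x).
  apply: mulr_ge0 => //. have : 0 <= (k-3)*x by apply: mulr_ge0; lia. lia.
have F6 : 0 <= (2*N - a)*(2*N+a) by apply: mulr_ge0; lia.
have F7 : 0 <= x^+2 * a by apply: mulr_ge0 => //; exact: sqr_ge0.
rewrite /d in F1 F2 F3 F4.
lia.
Qed.

Section Main.
Variable n : nat.
Variable x : 'I_n -> int.
Hypothesis Hx : in_A x.

Definition y (j : nat) : int :=
  match (insub j : option 'I_n) with Some i => x i | None => 0 end.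

Lemma yE (i : 'I_n) : y i = x i.
Proof. by rewrite /y valK. Qed.

Lemma y_out j : (n <= j)%N -> y j = 0.
Proof. by move=> h; rewrite /y insubF // ltnNge h. Qed.

Lemma y_ge0 j : 0 <= y j.
Proof.
case: Hx => _ [_ [H _]].
case: (ltnP j n) => hj; last by rewrite y_out.
by have := H (Ordinal hj); rewrite -(yE (Ordinal hj)).
Qed.

Lemma y_dec i j : (i <= j)%N -> y j <= y i.
Proof.
case: Hx => _ [H [_ _]] hij.
case: (ltnP j n) => hj; last by rewrite y_out // y_ge0.
have hi : (i < n)%N by apply: leq_ltn_trans hj.
by have := H (Ordinal hi) (Ordinal hj) hij; rewrite -(yE (Ordinal hi)) -(yE (Ordinal hj)).
Qed.

Definition A k := \sum_(i < k) y i.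

Lemma AS k : A k.+1 = A k + y k.
Proof. by rewrite /A big_ord_recr. Qed.

Lemma A0 : A 0 = 0.
Proof. by rewrite /A big_ord0. Qed.

Lemma A_ge0 k : 0 <= A k.
Proof. by apply: sumr_ge0 => i _; exact: y_ge0. Qed.

Lemma A_mono k l : (k <= l)%N -> A k <= A l.
Proof.
move=> /subnKC <-; elim: (l - k)%N => [|m IH]; first by rewrite addn0.
by rewrite addnS AS; have := y_ge0 (k + m); lia.
Qed.

Lemma A_lb k j : (k <= j.+1)%N -> k%:Z * y j <= A k.
Proof.
elim: k => [|k IH] hk; first by rewrite A0 mul0r.
rewrite AS; have := IH (ltnW hk); have := y_dec _ _ (ltnSE hk); have := y_ge0 j; nia.
Qed.

Lemma A_cond k : (k <= n)%N -> \sum_(i < n | (i < k)%N) x i = A k.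
Proof.
move=> hk; rewrite /A.
transitivity (\sum_(i < n | (i < k)%N) y i).
  by apply: eq_bigr => i _; rewrite yE.
rewrite -(subnKC hk) big_split_ord /=.
rewrite [X in _ + X]big_pred0; last first.
  by move=> i /=; rewrite ltnNge leq_addr.
rewrite addr0; apply: eq_bigl => i /=; by rewrite ltn_ord.
Qed.

Lemma A_pref k : (1 <= k <= n)%N -> A k <= 2 * n%:Z + 6 * k%:Z - 16.
Proof.
move=> hk; case: Hx => _ [_ [_ [H _]]].
rewrite -A_cond; [exact: H | by case/andP: hk].
Qed.

Lemma A_tot k : (k <= n)%N -> A k <= 6 * n%:Z - 12.
Proof.
move=> hk; case: Hx => _ [_ [_ [_ H]]].
apply: le_trans (A_mono _ _ hk) _.
rewrite -A_cond // (eq_bigl xpredT) // => i; exact: ltn_ord.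
Qed.

Definition Sk k := \sum_(j < k) y j ^+ 2 * A j.

Lemma S_eq : S x = Sk n.
Proof.
rewrite /S /Sk.
under eq_bigr => i _ do rewrite big_mkcond /=.
rewrite exchange_big /=; apply: eq_bigr => j _.
rewrite -big_mkcond /= -mulr_suml A_cond; last exact: ltnW.
by rewrite yE mulrC.
Qed.


Definition N := n%:Z.
Definition Psi k := y k.-1 * (6 * k%:Z + 2*N - (if 2*N <= A k then A k else 2*N)).
Definition L k := 8 * Sk k + 16 * N * Psi k.
Definition R k := (if 2*N <= A k then 8 * N^+3 + 288 * N^+2 else A k ^+ 3) + 384 * N * A k.

Lemma SkS k : Sk k.+1 = Sk k + y k ^+ 2 * A k.
Proof. by rewrite /Sk big_ord_recr. Qed.

Lemma base : (2 <= n)%N -> L 2 <= R 2.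
Proof.
move=> hn.
have hA2 := A_pref 2 hn.
rewrite /L /R /Psi /Sk !big_ord_recr big_ord0 /=.
have eA2 : A 2 = y 0 + y 1 by rewrite !AS A0 add0r.
have eA1 : A 1 = y 0 by rewrite AS A0 add0r.
rewrite eA2 eA1 A0 in hA2 *.
have -> : (2 * N <= y 0 + y 1) = false by apply/negbTE; rewrite -ltNge /N; lia.
have h01 := y_dec 0 1 isT.
have h1 := y_ge0 1.
have G1 : 0 <= (y 0 - y 1)^+2 * (y 0 + 5 * y 1) by apply: mulr_ge0; [exact: sqr_ge0|lia].
have G2 : 0 <= y 1 ^+2 * (y 0 - y 1) by apply: mulr_ge0; [exact: sqr_ge0|lia].
have G3 : 0 <= N * y 1 by apply: mulr_ge0; rewrite /N; lia.
have G4 : 0 <= N * y 0 by apply: mulr_ge0; rewrite /N; lia.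
rewrite /N in G3 G4 *.
lia.
Qed.

Lemma step k : (2 <= k)%N -> (k < n)%N -> L k <= R k -> L k.+1 <= R k.+1.
Proof.
move=> hk hkn IH.
have hx0 := y_ge0 k.
have hp0 := y_ge0 k.-1.
have hxp := y_dec k.-1 k (leq_pred k).
have hkx := A_lb k k (leqnSn k).
have hkp := A_lb k k.-1 (leqSpred k).
have hpre : A k <= 2 * N + 6 * k%:Z - 16.
  by apply: A_pref; rewrite (ltnW hkn) andbT; apply: leq_trans hk.
have hpre2 : A k.+1 <= 2 * N + 6 * k.+1%:Z - 16 by apply: A_pref; rewrite hkn.
have htot := A_tot k.+1 hkn.
have hnn : (2 <= N) by rewrite /N; lia.
move: IH; rewrite /L /R /Psi SkS AS /= in hpre2 htot *.
set a := A k in hkx hkp hpre hpre2 htot *.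
set xx := y k in hx0 hxp hkx hpre2 htot *.
set p := y k.-1 in hp0 hxp hkp *.
have [h1|h1] := boolP (2 * N <= a); have [h2|h2] := boolP (2 * N <= a + xx);
  rewrite ?h1 ?h2 ?(negbTE h1) ?(negbTE h2) => IH.
- have F1 : 0 <= xx^+2 * (6 * k%:Z - (a - 2 * N)) by apply: mulr_ge0; [exact: sqr_ge0|lia].
  have F2 : 0 <= xx * (a - k%:Z * xx) by apply: mulr_ge0; lia.
  have F3 : 0 <= xx * (6 * N - a) by apply: mulr_ge0; rewrite /N in htot *; lia.
  have F4 : 0 <= N * ((p - xx) * (6 * k%:Z + 2 * N - a)).
    by apply: mulr_ge0; [lia|apply: mulr_ge0; lia].
  have F5 : 0 <= N * xx^+2 by apply: mulr_ge0; [lia|exact: sqr_ge0].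
  lia.
- lia.
- move: h1; rewrite -ltNge => h1.
  have hc : a^+3 + 8*xx^+2*a <= 8*N^+3 + 288*N^+2.
    apply: (crossing a xx N k%:Z) => //; try lia; exact: A_ge0.
  have F1 : 0 <= N * (xx * (a + xx - 2 * N)) by apply: mulr_ge0; [lia|apply: mulr_ge0; lia].
  have F2 : 0 <= N * (k%:Z * (p - xx)) by apply: mulr_ge0; [lia|apply: mulr_ge0; lia].
  have F3 : 0 <= N * xx by apply: mulr_ge0; lia.
  lia.
- move: h1 h2; rewrite -!ltNge => h1 h2.
  have h2x : 2 * xx <= a.
    have : 0 <= (k%:Z - 2) * xx by apply: mulr_ge0; lia.
    lia.
  have hc := cube_step a xx hx0 h2x.
  have F2 : 0 <= N * (k%:Z * (p - xx)) by apply: mulr_ge0; [lia|apply: mulr_ge0; lia].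
  have F3 : 0 <= N * xx by apply: mulr_ge0; lia.
  lia.
Qed.

Lemma inv m : (m.+2 <= n)%N -> L m.+2 <= R m.+2.
Proof.
elim: m => [|m IH] h; first exact: base.
apply: step => //; apply: IH; exact: ltnW.
Qed.

Lemma final : (2 <= n)%N -> S x <= N^+3 + 324 * N^+2.
Proof.
move=> hn.
have hI : L n <= R n by move: (inv (n-2)); rewrite -addn2 subnK //; apply.
rewrite S_eq.
have htot := A_tot n (leqnn n).
have hnn : (2 <= N) by rewrite /N; lia.
have hy := y_ge0 n.-1.
move: hI; rewrite /L /R /Psi.
have [h1|h1] := boolP (2 * N <= A n); rewrite ?h1 ?(negbTE h1) => hI.
- have F : 0 <= N * (y n.-1 * (6 * n%:Z + 2 * N - A n)) by apply: mulr_ge0; [lia|apply: mulr_ge0; rewrite /N in htot *; lia].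
  have F2 : 0 <= N * A n by apply: mulr_ge0; [lia|exact: A_ge0].
  have F3 : N * A n <= N * (6 * N) by apply: ler_wpM2l; [lia| rewrite /N in htot *; lia].
  lia.
- move: h1; rewrite -ltNge => h1.
  have F : 0 <= N * (y n.-1 * (6 * n%:Z + 2 * N - 2 * N)) by apply: mulr_ge0; [lia|apply: mulr_ge0; rewrite /N; lia].
  have F3 : N * A n <= N * (6 * N) by apply: ler_wpM2l; [lia| rewrite /N in htot *; lia].
  have hc : A n ^+ 3 <= (2 * N)^+3 by apply: lerXn2r; rewrite ?nnegrE; [exact: A_ge0|lia|lia].
  lia.
Qed.

End Main.

Theorem theorem5 :
  exists C : rat, forall (n : nat) (x : 'I_n -> int),
    (2 <= n)%N -> in_A x ->
    (S x)%:~R <= (n%:R ^+ 3 + C * n%:R ^+ 2 : rat).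
Proof.
exists 324%:R => n x hn hA.
have h := @final n x hA hn.
have : (S x)%:~R <= ((n%:Z)^+3 + 324 * (n%:Z)^+2)%:~R :> rat by rewrite ler_int.
by rewrite rmorphD rmorphM !rmorphXn /=.
Qed.
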